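(* Let $t$ be an integer with $m=2t+1\geq 11$ and $n=2^m+1$, and let $x$ be an odd integer. Then: (1) if $1\leq x\leq 2^{t+1}-3$, then $x$ is a coset leader; (2) if $2^{t+1}+3\leq x\leq 2^{t+1}+2^{t}-3$, then $x$ is a coset leader; (3) if $2^{t+1}+2^{t}+3\leq x\leq 2^{t+2}-9$, then $x$ is a coset leader; (4) if $x\in\{2^{t+1}-1,\ 2^{t+1}+1,\ 2^{t+1}+2^{t}-1,\ 2^{t+1}+2^{t}+1\}$ or $2^{t+2}-7\leq x\leq 2^{t+2}+7$, then $x$ is not a coset leader.
   Context: For $n=2^m+1$ and an integer $x$, the 2-cyclotomic coset of $x$ modulo $n$ is $C_x=\{x\cdot 2^{j} \bmod n : j\geq 0\}\subseteq\{0,1,\dots,n-1\}$, and $|C_x|$ denotes its cardinality. For $0\leq x\leq n-1$, ''$x$ is a coset leader'' means that $x$ is the smallest element of $C_x$. *)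

(* Defs.v *)
From mathcomp Require Import all_boot.
Set Implicit Arguments. Unset Strict Implicit. Unset Printing Implicit Defensive.

Definition in_coset (n x y : nat) : Prop := exists j : nat, y = (x * 2 ^ j) %% n.

Definition coset_leader (n x : nat) : Prop :=
  x < n /\ in_coset n x x /\ forall y, in_coset n x y -> x <= y.

(* Main.v *)
Require Import Defs.
From mathcomp Require Import all_boot zify.

Lemma wrap_q n x Q q r : 1 <= x -> x*Q = q*n + r -> x <= r -> r + x <= n ->
  x <= (x*Q)%%n /\ (x*Q)%%n + x <= n.
Proof.
move=> x1 -> xr rn; rewrite modnMDl modn_small //; lia.
Qed.

Lemma nowrap n x Q : 1 <= x -> 1 <= Q -> x*Q + x <= n ->
  x <= (x*Q)%%n /\ (x*Q)%%n + x <= n.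
Proof.
move=> x1 Q1 h; apply: (@wrap_q n x Q 0 (x*Q)) => //; nia.
Qed.

Lemma generic n x P Q : n = P*Q + 1 -> 2 <= P -> ~~ odd P -> odd x ->
  x*(P+1) <= P*Q -> x <= Q -> x <= (x*Q)%%n /\ (x*Q)%%n + x <= n.
Proof.
move=> hn P2 eP ox h1 h2.
have x1 : 1 <= x by move: ox; case: x {h1 h2}.
have dx := divn_eq x P.
set hi := x %/ P in dx; set lo := x %% P in dx.
have loP : lo < P by rewrite ltn_pmod //; lia.
have lo1 : 1 <= lo.
  case: (posnP lo) => // l0; move: ox; rewrite dx l0 addn0 oddM (negbTE eP) andbF //.
have hx : hi * P <= x by lia.
have hQ : hi + x <= Q.
  have : (hi + x) * P <= Q * P by nia.
  by rewrite leq_pmul2r //; lia.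
have hlo : lo * Q + Q <= P * Q by nia.
apply: (@wrap_q n x Q hi (lo*Q - hi)) => //; nia.
Qed.
Lemma key : forall X q r z, X = q*(z+1) + r -> 1 <= r -> r < z+1 ->
   X*z = (q*z + r - 1)*(z+1) + (z+1-r).
Proof. move=> X q r z -> r1 r2.
case: r r1 r2 => // s _ sz.
have [w ->] : exists w, z = s + w by exists (z - s); lia.
have -> : q * (s + w) + s.+1 - 1 = q*(s+w) + s by lia.
have -> : s + w + 1 - s.+1 = w by lia.
rewrite !mulnDl !mulnDr !mulSn !mulnS. nia. Qed.
Lemma e2 z : 0 < z -> z^2 = (z+1-2)*(z+1)+1.
Proof. move=> z0; rewrite expnS expn1. have -> : z+1-2 = z-1 by lia. 
case: z z0 => // z _. rewrite subn1 /=. nia. Qed.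
Lemma leader_of (m x : nat) : 0 < m -> 0 < x ->
  (forall j, j < m -> x <= (x*2^j) %% (2^m+1) /\ (x*2^j)%%(2^m+1) + x <= 2^m+1) ->
  coset_leader (2^m+1) x.
Proof.
move=> m0 x0 H; set n := 2^m+1 in H *.
have [h0 h0'] := H 0 m0; rewrite expn0 muln1 in h0 h0'.
have xn : x < n by lia.
split=> //; split; first by exists 0; rewrite expn0 muln1 modn_small.
move=> y [j ->].
have n1 : 1 < n by rewrite /n; have := expn_gt0 2 m; lia.
have e2 : 2^(2*m) %% n = 1.
  have -> : 2^(2*m) = (n-2)*n + 1.
    rewrite mulnC expnM /n; apply: e2; exact: expn_gt0.
  by rewrite modnMDl modn_small.
have ek : forall k, 2^(k*(2*m)) %% n = 1.
  by move=> k; rewrite mulnC expnM -modnXm e2 exp1n modn_small.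
rewrite (divn_eq j (2*m)) addnC expnD mulnA -modnMmr ek muln1.
have jl : j %% (2*m) < 2*m by rewrite ltn_pmod // muln_gt0.
set i := j %% (2*m) in jl *.
case: (ltnP i m) => im; first by case: (H i im).
have -> : i = (i - m) + m by lia.
have [r1 r2] := H (i - m) ltac:(lia).
set r := (x * 2 ^ (i-m)) %% n in r1 r2.
have dq := divn_eq (x * 2 ^ (i-m)) n.
rewrite -/r in dq; set q := _ %/ n in dq.
have -> : x * 2^(i-m+m) = (q*2^m + r - 1) * n + (n - r).
  by rewrite expnD mulnA /n; apply: key => //; lia.
rewrite modnMDl modn_small; lia.
Qed.
Lemma jcases t j : j < 2*t+1 ->
 (2*2^j <= 2^t) \/ (2^j = 2^t) \/ (2^j = 2*2^t) \/
 (exists P, P*2^j = 2*2^t*2^t /\ 2 <= P /\ ~~odd P /\ 2*P <= 2^t).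
Proof.
move=> jm.
case: (ltnP j t) => h1.
  by left; rewrite -expnS leq_pexp2l.
case: (ltnP j t.+2) => h2.
  right; case: (j =P t) => [->|ne]; [by left|right; left].
  by rewrite (_ : j = t.+1) ?expnS //; lia.
right; right; right; exists (2^(2*t+1-j)); split.
  rewrite -expnD subnK; last lia.
  by rewrite (_ : 2*t+1 = (t+t).+1) ?expnS ?expnD ?mulnA //; lia.
split; first by rewrite (_ : 2 = 2^1) // leq_pexp2l //; lia.
split; first by rewrite oddX /=; apply/eqP; lia.
by rewrite -expnS leq_pexp2l //; lia.
Qed.
Lemma notleader n x k q y : x * 2^k = q*n + y -> y < n -> y < x -> ~ coset_leader n x.
Proof.
move=> e yn yx [_ [_ H]].
have : x <= y by apply: H; exists k; rewrite e modnMDl modn_small.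
lia.
Qed.

Lemma notleader2 m x k q r : x * 2^k = q*(2^m+1) + r -> 1 <= r -> r < 2^m+1 ->
  2^m + 1 - r < x -> ~ coset_leader (2^m+1) x.
Proof.
move=> e r1 rn rx.
apply: (@notleader _ x (k+m) (q*2^m + r - 1) (2^m+1-r)) => //; last lia.
by rewrite expnD mulnA; apply: key.
Qed.
Theorem theorem3p1 (t : nat) (hm : 11 <= 2 * t + 1) (x : nat) (hx : odd x) :
  let m := 2 * t + 1 in
  let n := 2 ^ m + 1 in
  ((1 <= x <= 2 ^ t.+1 - 3) -> coset_leader n x) /\
  ((2 ^ t.+1 + 3 <= x <= 2 ^ t.+1 + 2 ^ t - 3) -> coset_leader n x) /\
  ((2 ^ t.+1 + 2 ^ t + 3 <= x <= 2 ^ t.+2 - 9) -> coset_leader n x) /\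
  ((x \in [:: 2 ^ t.+1 - 1; 2 ^ t.+1 + 1; 2 ^ t.+1 + 2 ^ t - 1; 2 ^ t.+1 + 2 ^ t + 1]) ||
   (2 ^ t.+2 - 7 <= x <= 2 ^ t.+2 + 7) -> ~ coset_leader n x).
Proof.
move=> m n.
have a32 : 32 <= 2^t by rewrite (_ : 32 = 2^5) // leq_pexp2l //; lia.
have ea : 2^m = 2*2^t*2^t by rewrite /m (_ : 2*t+1 = (t+t).+1) ?expnS ?expnD ?mulnA //; lia.
have ae : ~~ odd (2^t) by rewrite oddX /=; apply/eqP; lia.
rewrite !expnS.
have x1 : 1 <= x by case: x hx.
have m0 : 0 < m by lia.
have J := @jcases t.
rewrite /n ea in J *; have eb : 2^t = 2 * 2^(t.-1) by rewrite -expnS; case: (t) hm.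
move Hb: (2^(t.-1)) eb => b eb.
move Ha: (2^t) a32 ae J ea eb => a a32 ae J ea eb.
split; [|split; [|split]].
- move=> /andP [h1 h2]; rewrite -ea; apply: leader_of => // j jm; rewrite ea.
  case: (J j jm) => [c|[c|[c|[P [c1 [c2 [c3 c4]]]]]]].
  + apply: nowrap => //; first by rewrite expn_gt0. nia.
  + rewrite c; apply: nowrap => //; nia.
  + rewrite c; apply: (@generic _ _ a) => //; nia.
  + apply: (@generic _ _ P) => //; nia.
- move=> /andP [h1 h2]; rewrite -ea; apply: leader_of => // j jm; rewrite ea.
  case: (J j jm) => [c|[c|[c|[P [c1 [c2 [c3 c4]]]]]]].
  + apply: nowrap => //; first by rewrite expn_gt0. nia.
  + rewrite c; apply: (@wrap_q _ _ _ 1 (x*a - (2*a*a+1))) => //; nia.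
  + rewrite c; apply: (@wrap_q _ _ _ 2 (x*(2*a) - 2*(2*a*a+1))) => //; nia.
  + apply: (@generic _ _ P) => //; nia.
- move=> /andP [h1 h2]; rewrite -ea; apply: leader_of => // j jm; rewrite ea.
  case: (J j jm) => [c|[c|[c|[P [c1 [c2 [c3 c4]]]]]]].
  + apply: nowrap => //; first by rewrite expn_gt0. nia.
  + rewrite c; apply: (@wrap_q _ _ _ 1 (x*a - (2*a*a+1))) => //; nia.
  + rewrite c; apply: (@wrap_q _ _ _ 3 (x*(2*a) - 3*(2*a*a+1))) => //; nia.
  + apply: (@generic _ _ P) => //; nia.
- rewrite -ea; case/orP.
  + rewrite !inE => /or4P [/eqP xe|/eqP xe|/eqP xe|/eqP xe].
    * apply: (@notleader2 _ _ t 0 (x*a)); rewrite ?Ha ?ea ?xe; clear -a32; nia.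
    * apply: (@notleader _ _ t 1 (a-1)); rewrite ?Ha ?ea ?xe; clear -a32; nia.
    * apply: (@notleader2 _ _ t.+1 2 (2*a*a-2*a-2)); rewrite ?expnS ?Ha ?ea ?xe; clear -a32; nia.
    * apply: (@notleader _ _ t.+1 3 (2*a-3)); rewrite ?expnS ?Ha ?ea ?xe; clear -a32; nia.
  + move=> /andP [h1 h2].
    case: (ltnP x (4*a)) => h3.
    * apply: (@notleader2 _ _ t.-1 0 (x*b)); rewrite ?Hb ?ea; clear -a32 eb h1 h2 h3; nia.
    * have h4 : 4*a < x by case: (x =P 4*a) hx => [->|ne]; [rewrite oddM|lia].
      apply: (@notleader _ _ t.-1 1 (x*b - (2*a*a+1))); rewrite ?Hb ?ea; clear -a32 eb h1 h2 h4; nia.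
Qed.
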